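(* Let $x$ be a shallow feasible solution to the integer quadratic program (minimize $x^TQx$ subject to $Ax\le b$, $Cx=d$, $x\in\mathbb{Z}^n$). Then there exist a row $a_j^T$ of $A$ and an integer $b_j'$ such that $a_j^Tx=b_j'$ and $b_j'\in\{b_j-\alpha\cdot n\cdot\Delta^2,\ldots,b_j\}$. Further, $a_j^T$ is linearly independent from the rows of $C$.
   Context: Setting: $Q$ is an $n\times n$ integer symmetric matrix, $A$ an $m\times n$ integer matrix with rows $a_1^T,\dots,a_m^T$, $b\in\mathbb{Z}^m$ with entries $b_j$, $C$ an integer matrix with $n$ columns and linearly independent rows, and $d$ an integer vector. $\alpha$ is the maximum absolute value of an entry of $Q$ and $A$, and $\Delta$ is the maximum absolute value of the determinant of a square submatrix of $C$. $y_1,\dots,y_r$ is a basis of the nullspace of $C$ consisting of integer vectors with $|y_i|_\infty\le\Delta^2$ for all $i$, and $Y$ is the set of these vectors. A feasible solution is an $x\in\mathbb{Z}^n$ with $Ax\le b$ and $Cx=d$. A feasible solution $x$ is deep if $x+y_i$ and $x-y_i$ are feasible solutions for all $y_i\in Y$, and shallow otherwise. *)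

(* Defs.v *)
From HB Require Import structures.
From mathcomp Require Import all_boot all_order all_algebra.
Set Implicit Arguments. Unset Strict Implicit. Unset Printing Implicit Defensive.
Import Order.TTheory GRing.Theory Num.Theory.
Local Open Scope ring_scope.

(* integer matrices viewed over the rationals, for linear-algebra notions *)
Definition ratmx (p q : nat) (M : 'M[int]_(p, q)) : 'M[rat]_(p, q) :=
  map_mx (fun z : int => z%:~R) M.

Definition alpha (n m : nat) (Q : 'M[int]_n) (A : 'M[int]_(m, n)) : nat :=
  maxn (\max_(i : 'I_n) \max_(j : 'I_n) `|Q i j|%N)
       (\max_(i : 'I_m) \max_(j : 'I_n) `|A i j|%N).

(* A p x p submatrix is given by injective row selection f and column
   selection g (p ranges over 0..k; the 0x0 submatrix has determinant 1). *)
Definition Delta (k n : nat) (C : 'M[int]_(k, n)) : nat :=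
  \max_(p < k.+1)
    \max_(f : {ffun 'I_p -> 'I_k} | injectiveb f)
      \max_(g : {ffun 'I_p -> 'I_n} | injectiveb g)
        `|\det (\matrix_(i < p, j < p) C (f i) (g j))|%N.

Definition feasible (m n k : nat) (A : 'M[int]_(m, n)) (b : 'cV[int]_m)
    (C : 'M[int]_(k, n)) (d : 'cV[int]_k) (x : 'cV[int]_n) : Prop :=
  (forall j : 'I_m, (A *m x) j 0 <= b j 0) /\ C *m x = d.

(* Y : the columns col i Y are the vectors y_1, ..., y_r *)
Definition deep (m n k r : nat) (A : 'M[int]_(m, n)) (b : 'cV[int]_m)
    (C : 'M[int]_(k, n)) (d : 'cV[int]_k) (Y : 'M[int]_(n, r))
    (x : 'cV[int]_n) : Prop :=
  feasible A b C d x /\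
  forall i : 'I_r, feasible A b C d (x + col i Y) /\ feasible A b C d (x - col i Y).

Definition shallow (m n k r : nat) (A : 'M[int]_(m, n)) (b : 'cV[int]_m)
    (C : 'M[int]_(k, n)) (d : 'cV[int]_k) (Y : 'M[int]_(n, r))
    (x : 'cV[int]_n) : Prop :=
  feasible A b C d x /\ ~ deep A b C d Y x.

(* Main.v *)
Require Import Defs.
From HB Require Import structures.
From mathcomp Require Import all_boot all_order all_algebra.
From Stdlib Require Import Classical.
Import Order.TTheory GRing.Theory Num.Theory.
Local Open Scope ring_scope.

Lemma ratmxM (p q s : nat) (M : 'M[int]_(p, q)) (N : 'M[int]_(q, s)) :
  ratmx (M *m N) = ratmx M *m ratmx N.
Proof. by rewrite /ratmx map_mxM. Qed.

Lemma indep (n m k r : nat) (A : 'M[int]_(m, n)) (C : 'M[int]_(k, n))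
  (Y : 'M[int]_(n, r)) (hC : row_free (ratmx C)) (hY : C *m Y = 0)
  (j : 'I_m) (i : 'I_r) : (A *m col i Y) j 0 != 0 ->
  row_free (col_mx (ratmx C) (row j (ratmx A))).
Proof.
move=> hs.
have na : ~~ (row j (ratmx A) <= ratmx C)%MS.
  apply/negP => /submxP [D hD].
  have : row j (ratmx A) *m ratmx (col i Y) = 0.
    by rewrite hD -mulmxA -ratmxM colE mulmxA hY mul0mx /ratmx map_mx0 mulmx0.
  move/matrixP => /(_ 0 0); rewrite /ratmx -map_row -map_mxM -row_mul !mxE.
  move=> /eqP; rewrite intr_eq0 => /eqP h.
  by move: hs; rewrite mxE h eqxx.
rewrite /row_free -addsmxE.
have lt : (ratmx C < (ratmx C + row j (ratmx A)))%MS.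
  by rewrite ltmxE addsmxSl /= addsmx_sub negb_and na orbT.
move/rank_ltmx: lt; move: hC; rewrite /row_free => /eqP ->.
have := rank_leq_row (col_mx (ratmx C) (row j (ratmx A))).
rewrite -addsmxE addn1 => h1 h2; apply/eqP; apply/anti_leq.
by rewrite h1 h2.
Qed.

Lemma bound (n m k r : nat) (Q : 'M[int]_n) (A : 'M[int]_(m, n)) (C : 'M[int]_(k, n))
  (Y : 'M[int]_(n, r))
  (hY_bound : forall (i : 'I_n) (l : 'I_r), `|Y i l| <= ((Delta C) ^ 2)%:Z)
  (j : 'I_m) (i : 'I_r) :
  `|(A *m col i Y) j 0| <= ((alpha Q A * n * (Delta C) ^ 2)%N)%:Z.
Proof.
rewrite mxE; apply: le_trans (ler_norm_sum _ _ _) _.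
have -> : ((alpha Q A * n * (Delta C) ^ 2)%N)%:Z =
    \sum_(l < n) ((alpha Q A)%:Z * ((Delta C) ^ 2)%:Z).
  by rewrite sumr_const card_ord -mulr_natr natz -!PoszM mulnAC.
apply: ler_sum => l _; rewrite normrM mxE.
apply: ler_pM => //.
have : (`|A j l|%N <= alpha Q A)%N.
  apply: leq_trans (leq_maxr _ _).
  by apply: leq_trans (leq_bigmax j); apply: (leq_bigmax l).
by rewrite -lez_nat abszE.
Qed.

Theorem lemma2 (n m k r : nat) (Q : 'M[int]_n) (A : 'M[int]_(m, n))
    (b : 'cV[int]_m) (C : 'M[int]_(k, n)) (d : 'cV[int]_k)
    (Y : 'M[int]_(n, r))
    (hQ : Q^T = Q)
    (hC : row_free (ratmx C))
    (hY_ker : C *m Y = 0)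
    (hY_free : row_free (ratmx Y)^T)
    (hY_span : (kermx (ratmx C)^T <= (ratmx Y)^T)%MS)
    (hY_bound : forall (i : 'I_n) (l : 'I_r), `|Y i l| <= ((Delta C) ^ 2)%:Z)
    (x : 'cV[int]_n)
    (hx : shallow A b C d Y x) :
  exists (j : 'I_m) (b' : int),
    (A *m x) j 0 = b' /\
    b j 0 - ((alpha Q A * n * (Delta C) ^ 2)%N)%:Z <= b' <= b j 0 /\
    row_free (col_mx (ratmx C) (row j (ratmx A))).
Proof.
case: hx => [[hAx hCx] hnd].
have hCy : forall i : 'I_r, C *m col i Y = 0.
  by move=> i; rewrite colE mulmxA hY_ker mul0mx.
have [i [j [e [he hgt]]]] : exists (i : 'I_r) (j : 'I_m) (e : int),
    (e = 1 \/ e = -1) /\ b j 0 < (A *m x) j 0 + e * (A *m col i Y) j 0.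
  apply: NNPP => hne; apply: hnd; split; first by [].
  move=> i; split; split.
  - move=> j; rewrite leNgt; apply/negP => h; apply: hne; exists i, j.
    by exists 1; split; [left | move: h; rewrite mul1r mulmxDr [(A *m x + _) j 0]mxE].
  - by rewrite mulmxDr hCy addr0.
  - move=> j; rewrite leNgt; apply/negP => h; apply: hne; exists i, j.
    by exists (-1); split; [right | move: h; rewrite mulN1r mulmxBr [(A *m x - _) j 0]mxE [(- (A *m col i Y)) j 0]mxE].
  - by rewrite mulmxBr hCy subr0.
set s := (A *m col i Y) j 0 in hgt.
set v := (A *m x) j 0 in hgt *.
have hv : v <= b j 0 := hAx j.
have hs : s != 0.
  apply/eqP => s0; move: hgt; rewrite s0 mulr0 addr0 => h.
  by move: (lt_le_trans h hv); rewrite ltxx.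
exists j, v; split; first by [].
split; last exact: (@indep _ _ _ _ A C Y hC hY_ker j i hs).
rewrite hv andbT.
have hb := @bound _ _ _ _ Q A C Y hY_bound j i; rewrite -/s in hb.
have hes : e * s <= `|s|.
  by case: he => ->; rewrite ?mul1r ?mulN1r ?ler_norm ?ler_normr ?lexx ?orbT.
rewrite lerBlDr; apply: ltW; apply: (lt_le_trans hgt).
by rewrite lerD2l (le_trans hes hb).
Qed.
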